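(* Let $R$ be a ring with unity and involution $*$, and let $a\in R$. The following statements are equivalent. (1) $a$ is Moore-Penrose invertible. (2) $a$ is left dual $a^*$-core invertible. (3) $a^*$ is left dual $a$-core invertible. (4) $a$ is left dual $(a^*,a^* )$-core invertible. (5) $a$ is left $(a^*,a^* )$-invertible. (6) $a^*$ is left dual $(a,a)$-core invertible. (7) $a^*$ is left $(a,a)$-invertible.
   Context: $a$ is Moore-Penrose invertible if there exists $x\in R$ with $axa=a$, $xax=x$, $(ax)^*=ax$, $(xa)^*=xa$. For $u,v\in R$, $u$ is left dual $v$-core invertible if there exists $x\in R$ with $uxvu=u$, $(xvu)^*=xvu$ and $x^2vu=x$. For $u,b,c\in R$, $u$ is left dual $(b,c)$-core invertible if there exists $x\in Rc$ with $bxub=b$ and $(xub)^*=xub$; and $u$ is left $(b,c)$-invertible if $b\in Rcub$ (equivalently, there exists $x\in Rc$ with $xub=b$). *)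

(* Defs.v *)
From mathcomp Require Import all_boot all_algebra.
Set Implicit Arguments. Unset Strict Implicit. Unset Printing Implicit Defensive.
Import GRing.Theory.
Local Open Scope ring_scope.

Definition involution (R : pzRingType) (star : R -> R) : Prop :=
  [/\ forall x y : R, star (x + y) = star x + star y,
      forall x y : R, star (x * y) = star y * star x
    & forall x : R, star (star x) = x].

Definition MP_invertible (R : pzRingType) (star : R -> R) (a : R) : Prop :=
  exists x : R, [/\ a * x * a = a, x * a * x = x,
                    star (a * x) = a * x & star (x * a) = x * a].

Definition left_dual_core_invertible (R : pzRingType) (star : R -> R)
    (u v : R) : Prop :=
  exists x : R, [/\ u * x * v * u = u, star (x * v * u) = x * v * u
                  & x ^+ 2 * v * u = x].

Definition left_dual_bc_core_invertible (R : pzRingType) (star : R -> R)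
    (u b c : R) : Prop :=
  exists x : R, [/\ exists r : R, x = r * c,
                    b * x * u * b = b
                  & star (x * u * b) = x * u * b].

Definition left_bc_invertible (R : pzRingType) (u b c : R) : Prop :=
  exists r : R, b = r * c * u * b.

(* Main.v *)
Require Import Defs.
From mathcomp Require Import all_boot all_algebra.
Local Open Scope ring_scope.
Import GRing.Theory.

Lemma L12 (R : pzRingType) (star : R -> R)
  (sM : forall x y : R, star (x * y) = star y * star x)
  (sK : forall x : R, star (star x) = x) (u b : R) (Hub : star u = b) :
  MP_invertible star u -> left_dual_core_invertible star u b.
Proof.
case=> x [Huxu Hxux Huxh Hxuh].
have K : star x * b = u * x by rewrite -Hub -sM Huxh.
have Y : x * star x * b * u = x * u.
  by rewrite -(mulrA x) K !mulrA Hxux.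
have K2 : star x * (x * u) = star x by rewrite -Hxuh -sM Hxux.
exists (x * star x); split.
- rewrite !mulrA; have -> : u * x * star x * b * u = u * (x * star x * b * u) by rewrite !mulrA.
  by rewrite Y mulrA Huxu.
- by rewrite Y Hxuh.
- rewrite expr2; have -> : x * star x * (x * star x) * b * u = x * star x * (x * star x * b * u) by rewrite !mulrA.
  by rewrite Y -mulrA K2.
Qed.

Lemma L25 (R : pzRingType) (star : R -> R)
  (sM : forall x y : R, star (x * y) = star y * star x)
  (sK : forall x : R, star (star x) = x) (u b : R) (Hub : star u = b)
  (Hbu : star b = u) :
  left_dual_core_invertible star u b -> left_bc_invertible u b b.
Proof.
case=> x [H1 H2 _]; exists x.
have E1 : b = b * u * star x * b.
  by rewrite -{1}Hub -{1}H1 !sM Hub Hbu !mulrA.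
have E2 : b * u * star x = x * b * u by rewrite -H2 !sM Hub Hbu mulrA.
by rewrite {1}E1 E2.
Qed.

Lemma L51 (R : pzRingType) (star : R -> R)
  (sM : forall x y : R, star (x * y) = star y * star x)
  (sK : forall x : R, star (star x) = x) (u b : R) (Hub : star u = b)
  (Hbu : star b = u) :
  left_bc_invertible u b b -> MP_invertible star u.
Proof.
case=> r Hb.
have Ha : u = u * b * u * star r.
  by rewrite -{1}Hbu {1}Hb !sM Hbu Hub !mulrA.
have F1 : u * (r * b) * u = u.
  rewrite {2}Ha !mulrA.
  have -> : u * r * b * u * b * u * star r = u * (r * b * u * b) * u * star r by rewrite !mulrA.
  by rewrite -Hb -Ha.
have F2 : star (r * b * u) = r * b * u.
  have E : r * b * u = r * b * u * b * u * star r by rewrite {1}Ha !mulrA.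
  by rewrite E !sM sK Hub Hbu !mulrA.
have G : b = b * u * star r * b.
  by rewrite -{1}Hub -{1}F1 !sM Hub Hbu !mulrA.
have F3 : u * (star r * b) * u = u.
  rewrite -{1}F1 !mulrA.
  have -> : u * r * b * u * star r * b * u = u * r * (b * u * star r * b) * u by rewrite !mulrA.
  by rewrite -G -(mulrA u r b) F1.
have F4 : star (u * (star r * b)) = u * (star r * b).
  have E : u * (star r * b) = u * (r * b) * u * (star r * b) by rewrite F1.
  by rewrite E !sM sK Hub Hbu !mulrA.
exists (r * b * u * (star r * b)); split.
- by rewrite !mulrA -(mulrA u r b) F1 -(mulrA u (star r) b) F3.
- have -> : r * b * u * (star r * b) * u * (r * b * u * (star r * b)) =
    r * b * (u * (star r * b) * u) * (r * b) * u * (star r * b) by rewrite !mulrA.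
  rewrite F3; have -> : r * b * u * (r * b) * u * (star r * b) = r * b * (u * (r * b) * u) * (star r * b) by rewrite !mulrA.
  by rewrite F1 !mulrA.
- by rewrite !mulrA -(mulrA u r b) F1 -(mulrA u (star r) b).
- have -> : r * b * u * (star r * b) * u = r * b * (u * (star r * b) * u) by rewrite !mulrA.
  by rewrite F3 F2.
Qed.

Lemma L14 (R : pzRingType) (star : R -> R)
  (sM : forall x y : R, star (x * y) = star y * star x)
  (sK : forall x : R, star (star x) = x) (u b : R) (Hub : star u = b) :
  MP_invertible star u -> left_dual_bc_core_invertible star u b b.
Proof.
case=> x [Huxu Hxux Huxh Hxuh].
have K : star x * b = u * x by rewrite -Hub -sM Huxh.
have M : star x * x * u * b = u * x.
  by rewrite -(mulrA _ x u) -Hxuh -Hub -sM Hxux -sM Huxh.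
exists (star x * x); split.
- exists (star x * x * star x).
  by rewrite -!(mulrA (star x)) -(mulrA x) K (mulrA x u x) Hxux.
- have -> : b * (star x * x) * u * b = b * (star x * x * u * b) by rewrite !mulrA.
  by rewrite M -Huxh -Hub -sM Huxu.
- by rewrite M Huxh.
Qed.

Lemma L45 (R : pzRingType) (star : R -> R) (u b : R) :
  left_dual_bc_core_invertible star u b b -> left_bc_invertible u b b.
Proof.
case=> x [[r ->] H _]; exists (b * r).
by rewrite -{1}H !mulrA.
Qed.

Lemma MPstar (R : pzRingType) (star : R -> R)
  (sM : forall x y : R, star (x * y) = star y * star x)
  (sK : forall x : R, star (star x) = x) (u : R) :
  MP_invertible star u -> MP_invertible star (star u).
Proof.
case=> x [Huxu Hxux Huxh Hxuh]; exists (star x); split.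
- by rewrite -!sM !mulrA Huxu.
- by rewrite -!sM !mulrA Hxux.
- by rewrite -sM sK Hxuh.
- by rewrite -sM sK Huxh.
Qed.

Arguments L12 {R star} sM sK {u b}.
Arguments L25 {R star} sM sK {u b}.
Arguments L51 {R star} sM sK {u b}.
Arguments L14 {R star} sM sK {u b}.
Arguments L45 {R star u b}.
Arguments MPstar {R star} sM sK {u}.

Lemma chain (R : pzRingType) (star : R -> R)
  (sM : forall x y : R, star (x * y) = star y * star x)
  (sK : forall x : R, star (star x) = x) (u b : R) (Hub : star u = b)
  (Hbu : star b = u) :
  [/\ MP_invertible star u <-> left_dual_core_invertible star u b,
      MP_invertible star u <-> left_dual_bc_core_invertible star u b b
    & MP_invertible star u <-> left_bc_invertible u b b].
Proof.
have L1 := L51 sM sK Hub Hbu.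
split; split.
- exact: L12.
- by move/(L25 sM sK Hub Hbu).
- exact: L14.
- by move/L45.
- by move/(L12 sM sK Hub)/(L25 sM sK Hub Hbu).
- exact: L1.
Qed.
Arguments chain {R star} sM sK {u b}.

Theorem theorem3p10 (R : pzRingType) (star : R -> R)
    (Hstar : involution star) (a : R) :
  [<-> MP_invertible star a;
       left_dual_core_invertible star a (star a);
       left_dual_core_invertible star (star a) a;
       left_dual_bc_core_invertible star a (star a) (star a);
       left_bc_invertible a (star a) (star a);
       left_dual_bc_core_invertible star (star a) a a;
       left_bc_invertible (star a) a a].
Proof.
case: Hstar => _ sM sK.
have [A1 A2 A3] := chain sM sK (erefl (star a)) (sK a).
have [B1 B2 B3] := chain sM sK (sK a) (erefl (star a)).
have E : MP_invertible star (star a) <-> MP_invertible star a.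
  split; last exact: MPstar.
  by move/(MPstar sM sK); rewrite sK.
tfae.
- by move/A1.
- by move/A1/E/B1.
- by move/B1/E/A2.
- by move/A2/A3.
- by move/A3/E/B2.
- by move/B2/B3.
- by move/B3/E.
Qed.
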